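(* Let $S$ be a set of patterns and let $f_n$ denote the number of rooted labeled forests on $[n]$ avoiding $S$. If the limit $L_S=\lim_{n\to\infty}\frac{f_n^{1/n}}{n}$ exists, then $L_S\in\{0\}\cup[e^{-1},1]$.
   Context: A rooted labeled forest on $[n]$ is an unordered forest on $n$ vertices, each component with a distinguished root, with distinct labels from $[n]$. A pattern of length $k$ is a permutation of $[k]$; an instance of it is a sequence of vertices $v_1,\dots,v_k$ with $v_i$ a strict ancestor of $v_{i+1}$ whose labels are in the same relative order as the pattern; a forest avoids $S$ if it contains no instance of any pattern in $S$. *)

(* Defs.v *)
From HB Require Import structures.
From mathcomp Require Import all_boot all_order all_algebra.
From mathcomp Require Import fingroup perm.
From mathcomp Require Import all_classical all_reals all_analysis.
Set Implicit Arguments. Unset Strict Implicit. Unset Printing Implicit Defensive.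
Import Order.TTheory GRing.Theory Num.Theory.

(* A rooted labeled forest on [n]: vertices are the labels 'I_n (= {0..n-1},
   standing for [n] = {1..n} shifted by one, order preserved).  It is encoded
   by its parent function: par v = None iff v is a root, par v = Some u iff u is
   the parent of v.  The parent map must be acyclic: iterating it from any
   vertex reaches None (a root's "parent") -- since a non-repeating walk has at
   most n vertices, n+1 steps is enough, so the bound below is no restriction. *)
Definition parent_fun (n : nat) := {ffun 'I_n -> option 'I_n}.

Definition climb n (par : parent_fun n) (k : nat) (v : 'I_n) : option 'I_n :=
  iter k (fun o => obind par o) (Some v).

Definition is_forest n (par : parent_fun n) : bool :=
  [forall v : 'I_n, [exists k : 'I_n.+1, climb par k v == None]].

Definition strict_anc n (par : parent_fun n) (u v : 'I_n) : Prop :=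
  exists k, (0 < k)%N /\ climb par k v = Some u.

Definition instance n k (par : parent_fun n) (pi : {perm 'I_k})
  (vs : 'I_k -> 'I_n) : Prop :=
  (forall (i j : 'I_k), val j = (val i).+1 -> strict_anc par (vs i) (vs j)) /\
  (forall (i j : 'I_k), (vs i < vs j)%N = (pi i < pi j)%N).

Definition contains n k (par : parent_fun n) (pi : {perm 'I_k}) : Prop :=
  exists vs, instance par pi vs.

Definition pattern_set := forall k : nat, pred {perm 'I_k}.

Definition avoids n (par : parent_fun n) (S : pattern_set) : Prop :=
  forall k (pi : {perm 'I_k}), pi \in S k -> ~ contains par pi.

Definition num_avoiding (S : pattern_set) (n : nat) : nat :=
  #|[set par : parent_fun n | is_forest par && `[< avoids par S >]]|.

(* Main.v *)
Require Import Defs.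
From HB Require Import structures.
From mathcomp Require Import all_boot all_order all_algebra.
From mathcomp Require Import fingroup perm.
From mathcomp Require Import all_classical all_reals all_analysis.
From mathcomp Require Import zify.
Import Order.TTheory GRing.Theory Num.Theory.
Import numFieldNormedType.Exports.

Set Implicit Arguments. Unset Strict Implicit.
Local Notation subsetP := fintype.subsetP.
Local Notation inE := finset.inE.

Section Forest.
Variables (n : nat) (par : parent_fun n).
Local Notation F := (fun o : option 'I_n => obind par o).

Lemma iter_None k : iter k F None = None.
Proof. by elim: k => //= k ->. Qed.

Lemma climb_of k j v u : climb par j v = Some u -> climb par (k + j) v = climb par k u.
Proof. by move=> H; rewrite /climb iterD -/(climb par j v) H. Qed.

Lemma climbS_par k v p : par v = Some p -> climb par k.+1 v = climb par k p.
Proof. by move=> H; rewrite /climb iterSr /= H. Qed.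

Lemma climbS_None k v : par v = None -> climb par k.+1 v = None.
Proof. by move=> H; rewrite /climb iterSr /= H iter_None. Qed.

Lemma sa_trans u w v : strict_anc par u w -> strict_anc par w v -> strict_anc par u v.
Proof.
move=> [k1 [k10 H1]] [k2 [k20 H2]]; exists (k1 + k2)%N; split; first lia.
by rewrite (climb_of _ H2).
Qed.

Lemma sa_par v p : par v = Some p -> strict_anc par p v.
Proof. by move=> H; exists 1%N; split => //; rewrite /climb /= H. Qed.

Lemma sa_par2 u v p : par v = Some p -> strict_anc par u p -> strict_anc par u v.
Proof. by move=> H H2; apply: sa_trans H2 (sa_par H). Qed.

Lemma forest_acyclic : is_forest par -> forall u, ~ strict_anc par u u.
Proof.
move=> /forallP Hf u [k [k0 Hk]].
have [j /eqP Hj] := existsP (Hf u).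
have Hm : forall m, climb par (m * k) u = Some u.
  elim=> [|m IH] //; by rewrite mulSn (climb_of _ IH).
have := Hm j; have -> : (j * k = (j * k - j) + j)%N.
  rewrite subnK //; by rewrite leq_pmulr.
rewrite /climb iterD -/(climb par j u) Hj iter_None //.
Qed.

Variable r : 'I_n -> nat.
Hypothesis Hr : forall v p, par v = Some p -> (r v < r p)%N.

Lemma rank_climb k : forall v u, climb par k v = Some u -> (r v + k <= r u)%N.
Proof.
elim: k => [|k IH] v u.
  by rewrite /climb /= => -[->]; rewrite addn0.
case Hp: (par v) => [p|].
  rewrite (climbS_par _ Hp) => /IH; have := Hr Hp; lia.
by rewrite (climbS_None _ Hp).
Qed.

Lemma rank_sa u v : strict_anc par u v -> (r v < r u)%N.
Proof. move=> [k [k0 /rank_climb]]; lia. Qed.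

Lemma rank_forest : (forall v, r v < n)%N -> is_forest par.
Proof.
move=> Hb; apply/forallP => v; apply/existsP; exists ord_max; apply/eqP.
change (climb par n v = None).
case Hc: (climb par n v) => [u|] //.
have := rank_climb Hc; have := Hb u; lia.
Qed.
End Forest.

Lemma chain_rel n (par : parent_fun n) (R : rel 'I_n) k (vs : 'I_k -> 'I_n) :
  transitive R -> (forall u v, strict_anc par u v -> R u v) ->
  (forall i j : 'I_k, val j = (val i).+1 -> strict_anc par (vs i) (vs j)) ->
  forall i j : 'I_k, (i < j)%N -> R (vs i) (vs j).
Proof.
move=> Rt Rs Hc.
suff : forall d (i j : 'I_k), nat_of_ord j = (nat_of_ord i + d.+1)%N -> R (vs i) (vs j).
  move=> H i j lt; apply: (H (j - i.+1)%N); lia.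
elim=> [|d IH] i j Hj.
  by apply: Rs; apply: Hc; rewrite /= Hj addn1.
have Hj' : (i + d.+1 < k)%N by have := ltn_ord j; lia.
apply: (Rt _ _ _ (IH i (Ordinal Hj') erefl)).
by apply: Rs; apply: Hc => /=; lia.
Qed.
Lemma card_opt (T : finType) (P : pred (option T)) :
  #|P| = (P None + #|[pred x | P (Some x)]|)%N.
Proof.
have SI : injective (@Some T) by move=> x y [].
rewrite -(cardID (pred1 None) P); congr (_ + _)%N.
  case HN: (P None).
    rewrite -[RHS](card1 (@None T)); apply: eq_card => o; rewrite !inE.
    by case: o => [x|] //=; rewrite ?andbF // andbT; exact: HN.
  transitivity 0%N => //; apply: eq_card0 => o; rewrite !inE.
  by case: o => [x|] //=; rewrite ?andbF // andbT; exact: HN.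
rewrite -(fintype.card_image SI); apply: eq_card => o; rewrite !inE.
case: o => [x|] /=.
  by rewrite fintype.mem_image.
by apply/esym/fintype.imageP => -[].
Qed.

Definition incp k (pi : {perm 'I_k}) := forall i j : 'I_k, (pi i < pi j)%N = (i < j)%N.
Definition decp k (pi : {perm 'I_k}) := forall i j : 'I_k, (pi i < pi j)%N = (j < i)%N.

Lemma card_lt n v : (v <= n)%N -> #|[pred p : 'I_n | (p < v)%N]| = v.
Proof.
move=> Hv; have wi : injective (widen_ord Hv) by move=> x y /(congr1 val) /= /val_inj.
rewrite -[RHS](card_ord v) -(fintype.card_image wi); apply: eq_card => p; rewrite !inE.
apply/idP/fintype.imageP => [lt|[x _ ->]] /=; last exact: ltn_ord.
by exists (Ordinal lt) => //; apply: val_inj.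
Qed.

Lemma prod_succ n : \prod_(i < n) i.+1 = n`!.
Proof. elim: n => [|n IH]; first by rewrite big_ord0. by rewrite big_ord_recr /= IH factS mulnC. Qed.

Lemma card_fam n (G : 'I_n -> pred (option 'I_n)) : #|family G| = \prod_(v < n) #|G v|.
Proof.
rewrite card_family foldrE big_map big_enum /=. by [].
Qed.

Lemma lowerB_inc (S : pattern_set) n : (forall k (pi : {perm 'I_k}), pi \in S k -> ~ incp pi) ->
  (n`! <= num_avoiding S n)%N.
Proof.
move=> HS.
pose G := fun v : 'I_n => [pred o : option 'I_n | if o is Some p then (p < v)%N else true].
have -> : n`! = #|family G|.
  rewrite card_fam -prod_succ; apply: eq_bigr => v _.
  rewrite card_opt /= add1n card_lt //; exact: ltnW.
apply: subset_leq_card; apply/subsetP => par /familyP Hp.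
pose r := fun v : 'I_n => (n.-1 - v)%N.
have Hr : forall v p, par v = Some p -> (r v < r p)%N.
  move=> v p Hv; have := Hp v; rewrite Hv inE /= /r => lt.
  have := ltn_ord v; lia.
rewrite inE; apply/andP; split.
  apply: (rank_forest Hr) => v; rewrite /r; have := ltn_ord v; lia.
apply/asboolP => k pi Hpi [vs [Hc Ho]]; apply: (HS k pi Hpi) => i j.
have Rs : forall u v, strict_anc par u v -> (u < v)%N.
  move=> u v /(rank_sa Hr); rewrite /r; have := ltn_ord v; have := ltn_ord u; lia.
have Rt : transitive (fun u v : 'I_n => (u < v)%N) by move=> x y z; apply: ltn_trans.
have := chain_rel Rt Rs Hc.
rewrite -Ho => H; case: (ltngtP i j) => [lt|gt|eq].
- exact: H.
- by apply/negbTE; rewrite -leqNgt ltnW // H.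
- by rewrite (ord_inj eq) !ltnn.
Qed.

Lemma lowerB_dec (S : pattern_set) n : (forall k (pi : {perm 'I_k}), pi \in S k -> ~ decp pi) ->
  (n`! <= num_avoiding S n)%N.
Proof.
move=> HS.
pose G := fun v : 'I_n => [pred o : option 'I_n | if o is Some p then (v < p)%N else true].
have -> : n`! = #|family G|.
  rewrite card_fam -prod_succ (reindex_inj rev_ord_inj) /=; apply: eq_bigr => v _.
  rewrite card_opt /= add1n.
  have -> : #|[pred x : 'I_n | (v < x)%N]| = #|[predC [pred p : 'I_n | (p < v.+1)%N]]|.
    by apply: eq_card => x; rewrite !inE ltnNge.
  have := cardC [pred p : 'I_n | (p < v.+1)%N]; rewrite card_ord card_lt //=.
  set X := #|_|; move: (nat_of_ord v) => w H; lia.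
apply: subset_leq_card; apply/subsetP => par /familyP Hp.
pose r := fun v : 'I_n => nat_of_ord v.
have Hr : forall v p, par v = Some p -> (r v < r p)%N.
  by move=> v p Hv; have := Hp v; rewrite Hv inE /=.
rewrite inE; apply/andP; split.
  by apply: (rank_forest Hr) => v; rewrite /r.
apply/asboolP => k pi Hpi [vs [Hc Ho]]; apply: (HS k pi Hpi) => i j.
have Rs : forall u v, strict_anc par u v -> (v < u)%N.
  by move=> u v /(rank_sa Hr).
have Rt : transitive (fun u v : 'I_n => (v < u)%N) by move=> x y z a b; apply: ltn_trans b a.
have := chain_rel Rt Rs Hc.
rewrite -Ho => H; case: (ltngtP i j) => [lt|gt|eq].
- by apply/negbTE; rewrite -leqNgt ltnW // H.
- exact: H.
- by rewrite (ord_inj eq) !ltnn.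
Qed.

Definition ancs n (par : parent_fun n) (v : 'I_n) := [set u | `[< strict_anc par u v >]].

Lemma anc_proper n (par : parent_fun n) v p : is_forest par -> par v = Some p ->
  ancs par p \proper ancs par v.
Proof.
move=> Hf Hp; apply/fintype.properP; split.
  apply/subsetP => u; rewrite !inE => /asboolP H; apply/asboolP.
  exact: sa_par2 Hp H.
exists p; rewrite !inE; apply/asboolP; first exact: sa_par.
exact: forest_acyclic.
Qed.

Lemma count_bound (S : pattern_set) n h :
  (forall par : parent_fun n, is_forest par -> avoids par S -> forall v, (#|ancs par v| < h)%N) ->
  (num_avoiding S n <= \sum_(g : {ffun 'I_n -> 'I_h})
      \prod_(v in [set: 'I_n]) (#|[set u in [set: 'I_n] | (g v < g u)%N]|).+1)%N.
Proof.
move=> Hh.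
pose G := fun (g : {ffun 'I_n -> 'I_h}) (v : 'I_n) =>
  [pred o : option 'I_n | if o is Some p then (g v < g p)%N else true].
have HG : forall g, #|family (G g)| =
    \prod_(v in [set: 'I_n]) (#|[set u in [set: 'I_n] | (g v < g u)%N]|).+1.
  move=> g; rewrite card_fam; apply: congr_big => // [v|v _]; first by rewrite finset.in_setT.
  rewrite card_opt /= add1n; congr (_.+1); apply: eq_card => u; rewrite !inE //.
under eq_bigr => g _ do rewrite -HG.
rewrite /num_avoiding -sum1_card.
set A := [set par | _].
apply: (leq_trans (n := \sum_(par in A) \sum_(g : {ffun 'I_n -> 'I_h}) (par \in family (G g)))).
  apply: leq_sum => par; rewrite inE => /andP[Hf /asboolP Ha].
  have Hb := Hh par Hf Ha.
  have Hlt : forall v, (h.-1 - #|ancs par v| < h)%N by move=> v; have := Hb v; lia.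
  pose gp : {ffun 'I_n -> 'I_h} := [ffun v => Ordinal (Hlt v)].
  rewrite (bigD1 gp) //=; apply: leq_trans (leq_addr _ _).
  have -> : par \in family (G gp) => //.
  apply/familyP => v; rewrite inE /=.
  case Hp: (par v) => [p|] //.
  rewrite /gp !ffunE /=.
  have := proper_card (anc_proper Hf Hp); have := Hb v; have := Hb p. move: #|ancs par p| #|ancs par v| => x y; lia.
apply: (leq_trans (n := \sum_par \sum_(g : {ffun 'I_n -> 'I_h}) (par \in family (G g)))).
  rewrite [leqRHS](bigID (fun par => par \in A)) /=; exact: leq_addr.
rewrite exchange_big /=.
apply: leq_sum => g _; rewrite -sum1_card big_mkcond /=.
rewrite [leqRHS]big_mkcond /=; apply: leq_sum => par _; by case: (_ \in _).
Qed.

Definition lts (s : bool) (x y : nat) := if s then (x < y)%N else (y < x)%N.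
Definition mchain n (par : parent_fun n) k (vs : 'I_k -> 'I_n) (s : bool) :=
  (forall i j : 'I_k, val j = (val i).+1 -> strict_anc par (vs i) (vs j)) /\
  (forall i j : 'I_k, (i < j)%N -> lts s (vs i) (vs j)).
Definition Iv n (par : parent_fun n) (s : bool) (K : nat) (u : 'I_n) :=
  (\max_(k < K | `[< exists vs : 'I_k.+1 -> 'I_n, mchain par vs s /\ vs ord_max = u >]) k.+1)%N.

Lemma lts_trans s : transitive (lts s).
Proof. by case: s => y x z /=; [apply: ltn_trans | move=> a b; apply: ltn_trans b a]. Qed.

Lemma mchain_const n (par : parent_fun n) k (v : 'I_n) s : (k <= 1)%N ->
  mchain par (fun _ : 'I_k => v) s.
Proof.
move=> hk; split.
  move=> i j /= H; exfalso; have := ltn_ord i; have := ltn_ord j; lia.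
move=> i j H; exfalso; have := ltn_ord i; have := ltn_ord j; lia.
Qed.

Lemma mchain_ext n (par : parent_fun n) s k (vs : 'I_k.+1 -> 'I_n) u w :
  mchain par vs s -> vs ord_max = u -> strict_anc par u w -> lts s u w ->
  exists vs' : 'I_k.+2 -> 'I_n, mchain par vs' s /\ vs' ord_max = w.
Proof.
move=> [Hc Ho] Hu Huw Hl.
have Hmax : forall i : 'I_k.+2, nat_of_ord i = k -> vs (inord i) = u.
  move=> i Hi; rewrite -Hu; congr vs; apply: val_inj; rewrite /= inordK Hi //.
have Hk : vs (inord k) = u by rewrite -Hu; congr vs; apply: val_inj; rewrite /= inordK.
exists (fun i : 'I_k.+2 => if (i < k.+1)%N then vs (inord i) else w); split; last first.
  by rewrite /= ltnn.
split.
  move=> i j Hij; case: (ltnP j k.+1) => hj.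
    have hi : (i < k.+1)%N by rewrite /= in Hij; lia.
    rewrite hi; apply: Hc; rewrite /= !inordK //; move: Hij => /= ->; lia.
  have hi : nat_of_ord i = k by have := ltn_ord j; move: Hij => /=; lia.
  by rewrite hi ltnSn Hk.
move=> i j lt; case: (ltnP j k.+1) => hj.
  have hi : (i < k.+1)%N by lia.
  rewrite hi; apply: Ho; rewrite !inordK //.
have hi : (i < k.+1)%N by have := ltn_ord j; lia.
rewrite hi.
case: (ltnP i k) => hik.
  apply: (lts_trans _ Hl); rewrite -Hu; apply: Ho; rewrite /= inordK //.
have -> : nat_of_ord i = k by lia.
by rewrite Hk.
Qed.

Lemma Iv_le n (par : parent_fun n) s K u : (Iv par s K u <= K)%N.
Proof. by apply/bigmax_leqP => k _; exact: ltn_ord. Qed.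

Lemma Iv_ge1 n (par : parent_fun n) s K u : (0 < K)%N -> (0 < Iv par s K u)%N.
Proof.
move=> K0; apply: (leq_trans _ (leq_bigmax_cond (Ordinal K0) _)) => //.
apply/asboolP; exists (fun _ => u); split => //; exact: mchain_const.
Qed.

Lemma Iv_step n (par : parent_fun n) s K u w : (0 < K)%N ->
  (forall vs : 'I_K.+1 -> 'I_n, ~ mchain par vs s) ->
  strict_anc par u w -> lts s u w -> (Iv par s K u < Iv par s K w)%N.
Proof.
move=> K0 NoCh Huw Hl.
suff : (Iv par s K u <= (Iv par s K w).-1)%N by have := Iv_ge1 par s w K0; lia.
apply/bigmax_leqP => k /asboolP [vs [Hvs Hu]].
have [vs' [Hvs' Hw]] := mchain_ext Hvs Hu Huw Hl.
case: (ltnP k.+1 K) => hk.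
  have := leq_bigmax_cond (P := fun k : 'I_K => `[< exists vs : 'I_k.+1 -> 'I_n, mchain par vs s /\ vs ord_max = w >])
    (F := fun k : 'I_K => k.+1) (Ordinal hk).
  move=> H; have : (k.+2 <= Iv par s K w)%N.
    apply: H; apply/asboolP; by exists vs'.
  lia.
have eK : (k.+2 = K.+1)%N by have := ltn_ord k; lia.
exfalso; clear Hw; move: vs' Hvs'; rewrite eK => vs' Hvs'; exact: NoCh vs' Hvs'.
Qed.

Lemma anc_climb n (par : parent_fun n) v u : u \in v |: ancs par v ->
  exists i, climb par i v = Some u.
Proof.
rewrite !inE => /orP [/eqP -> | /asboolP [k [_ Hk]]]; first by exists 0%N.
by exists k.
Qed.

Lemma anc_total n (par : parent_fun n) v u w : u \in v |: ancs par v ->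
  w \in v |: ancs par v -> u <> w -> strict_anc par u w \/ strict_anc par w u.
Proof.
move=> /anc_climb [i Hi] /anc_climb [j Hj] neq.
case: (ltngtP i j) => [lt|gt|eq].
- right; exists (j - i)%N; split; first by rewrite subn_gt0.
  by rewrite -(climb_of _ Hi) subnK // ltnW.
- left; exists (i - j)%N; split; first by rewrite subn_gt0.
  by rewrite -(climb_of _ Hj) subnK // ltnW.
- by exfalso; apply: neq; move: Hi; rewrite eq Hj => -[].
Qed.

Lemma ES_bound (S : pattern_set) n (par : parent_fun n) a b
  (pa : {perm 'I_a}) (pb : {perm 'I_b}) :
  pa \in S a -> incp pa -> pb \in S b -> decp pb -> is_forest par -> avoids par S ->
  forall v, (#|ancs par v| < a * b)%N.
Proof.
move=> Sa Ia Sb Db Hf Hav v.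
have NoA : forall vs : 'I_a -> 'I_n, ~ mchain par vs true.
  move=> vs [Hc Ho]; apply: (Hav a pa Sa); exists vs; split => // i j.
  rewrite Ia; case: (ltngtP i j) => [lt|gt|eq].
  - exact: Ho i j lt.
  - by apply/negbTE; rewrite -leqNgt ltnW //; exact: Ho j i gt.
  - by rewrite (ord_inj eq) ltnn.
have NoB : forall vs : 'I_b -> 'I_n, ~ mchain par vs false.
  move=> vs [Hc Ho]; apply: (Hav b pb Sb); exists vs; split => // i j.
  rewrite Db; case: (ltngtP i j) => [lt|gt|eq].
  - by apply/negbTE; rewrite -leqNgt ltnW //; exact: Ho i j lt.
  - exact: Ho j i gt.
  - by rewrite (ord_inj eq) ltnn.
have a2 : (1 < a)%N.
  by rewrite ltnNge; apply/negP => ha; apply: (NoA (fun _ => v)); exact: mchain_const.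
have b2 : (1 < b)%N.
  by rewrite ltnNge; apply/negP => ha; apply: (NoB (fun _ => v)); exact: mchain_const.
case: a pa Sa Ia NoA a2 => [//|K] pa Sa Ia NoA a2.
case: b pb Sb Db NoB b2 => [//|K'] pb Sb Db NoB b2.
have K0 : (0 < K)%N by [].
have K'0 : (0 < K')%N by [].
set A := v |: ancs par v.
have vA : v \notin ancs par v.
  by rewrite inE; apply/negP => /asboolP; apply: forest_acyclic.
have cA : #|A| = (#|ancs par v|).+1 by rewrite cardsU1 vA.
pose f := fun u => (inord (Iv par true K u) : 'I_K.+1, inord (Iv par false K' u) : 'I_K'.+1).
have finj : {in A &, injective f}.
  move=> u w uA wA /= Hfe; apply/eqP; apply: contraT => /eqP neq.
  move: Hfe => [/(congr1 val) e1 /(congr1 val) e2].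
  rewrite /= !inordK ?ltnS ?Iv_le // in e1 e2.
  have neqv : nat_of_ord u <> nat_of_ord w by move=> /ord_inj.
  case: (anc_total uA wA neq) => H.
    case: (ltngtP u w) => [lt|gt|eq] //.
      by have := Iv_step K0 NoA H lt; rewrite e1 ltnn.
    by have := Iv_step K'0 NoB H gt; rewrite e2 ltnn.
  case: (ltngtP u w) => [lt|gt|eq] //.
    by have := Iv_step K'0 NoB H lt; rewrite e2 ltnn.
  by have := Iv_step K0 NoA H gt; rewrite e1 ltnn.
change (#|ancs par v|.+1 <= K.+1 * K'.+1)%N; rewrite -cA -(card_in_imset finj).
by apply: leq_trans (max_card _) _; rewrite card_prod !card_ord.
Qed.

Local Open Scope ring_scope.

Section T.
Variable R : realType.

Lemma root_le (x y : R) n : 0 <= x -> 0 <= y -> (0 < n)%N -> x <= y ^+ n ->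
  x `^ n%:R^-1 <= y.
Proof.
move=> x0 y0 n0 xy.
have h1 : x `^ n%:R^-1 <= (y ^+ n) `^ n%:R^-1.
  apply: ge0_ler_powR => //; rewrite ?invr_ge0 ?ler0n //.
  idtac.
  by rewrite nnegrE exprn_ge0.
apply: (le_trans h1); rewrite -powR_mulrn // -powRrM mulfV ?powRr1 //.
by rewrite pnatr_eq0 -lt0n.
Qed.

Lemma root_ge (x y : R) n : 0 <= x -> 0 <= y -> (0 < n)%N -> y ^+ n <= x ->
  y <= x `^ n%:R^-1.
Proof.
move=> x0 y0 n0 xy.
have h1 : (y ^+ n) `^ n%:R^-1 <= x `^ n%:R^-1.
  apply: ge0_ler_powR => //; rewrite ?invr_ge0 ?ler0n //.
  idtac.
  by rewrite nnegrE exprn_ge0.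
apply: le_trans h1; rewrite -powR_mulrn // -powRrM mulfV ?powRr1 //.
by rewrite pnatr_eq0 -lt0n.
Qed.

Lemma u_le (f : nat) (c : R) n : 0 <= c -> (0 < n)%N -> f%:R <= (c * n%:R) ^+ n ->
  f%:R `^ n%:R^-1 / n%:R <= c.
Proof.
move=> c0 n0 h; have n0' : 0 < n%:R :> R by rewrite ltr0n.
rewrite ler_pdivrMr //; apply: root_le => //; first by rewrite mulr_ge0 ?ler0n.
Qed.

Lemma u_ge (f : nat) (c : R) n : 0 <= c -> (0 < n)%N -> (c * n%:R) ^+ n <= f%:R ->
  c <= f%:R `^ n%:R^-1 / n%:R.
Proof.
move=> c0 n0 h; have n0' : 0 < n%:R :> R by rewrite ltr0n.
rewrite ler_pdivlMr //; apply: root_ge => //; first by rewrite mulr_ge0 ?ler0n.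
Qed.

Lemma step_e (m : nat) : (m.+2%:R) ^+ m.+1 <= (m.+1%:R) ^+ m.+1 * expR 1 :> R.
Proof.
set k : R := m.+1%:R.
have hk : 0 < k by rewrite ltr0n.
have e1 : m.+2%:R = k + 1 by rewrite /k -natr1.
have h2 : k + 1 <= k * expR (k^-1).
  by have := expR_ge1Dx (k^-1); rewrite -(ler_pM2l hk) mulrDr mulr1 mulfV ?gt_eqF // addrC.
rewrite e1; apply: (le_trans (lerXn2r m.+1 _ _ h2)); rewrite ?nnegrE.
- by rewrite addr_ge0 // ltW.
- by rewrite mulr_ge0 // ltW // expR_gt0.
by rewrite exprMn -expRM_natr /k mulVf ?pnatr_eq0.
Qed.

Lemma fact_ge n : (n%:R * expR (-1)) ^+ n <= n`!%:R :> R.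
Proof.
have key : forall m, (m%:R) ^+ m <= m`!%:R * expR m%:R :> R.
  elim=> [|m IH]; first by rewrite expr0 fact0 mul1r expR0.
  have h1 : (m.+1%:R) ^+ m <= (m%:R) ^+ m * expR 1 :> R.
    case: m IH => [|m] IH; first by rewrite !expr0 mul1r -expR0 ler_expR.
    exact: step_e.
  rewrite exprS factS natrM -natr1 expRD -mulrA ler_wpM2l ?addr_ge0 //.
  rewrite -natr1 in h1; apply: (le_trans h1); rewrite mulrA ler_wpM2r //.
rewrite exprMn -expRM_natr mulNr mul1r expRN.
have hp : 0 < expR n%:R :> R by apply: expR_gt0.
by rewrite -(ler_pM2r hp) -mulrA mulVf ?gt_eqF // mulr1.
Qed.
End T.

Lemma Qh (R : realType) h : forall eta : R, 0 < eta -> exists N : nat,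
  forall (T : finType) (A : {set T}) (g : T -> nat),
  (forall x, x \in A -> g x < h)%N -> (N <= #|A|)%N ->
  (\prod_(v in A) (#|[set u in A | g v < g u]|).+1)%:R <= (eta * #|A|%:R) ^+ #|A|.
Proof.
elim: h => [|h IH] eta eta0.
  exists 1%N => T A g Hg; rewrite card_gt0 => /set0Pn [x /Hg].
  by rewrite ltn0.
set theta : R := Num.min 1 (eta / 2).
have th0 : 0 < theta by rewrite lt_min ltr01 divr_gt0.
have th1 : theta <= 1 by rewrite ge_min lexx.
have th2 : theta <= eta / 2 by rewrite ge_min lexx orbT.
have e2 : 0 <= 2 / eta by rewrite divr_ge0 // ltW.
pose m := (Num.bound (2 / eta)).+1.
have hm : 2 / eta < m%:R.
  apply: (lt_le_trans (archi_boundP e2)); rewrite ler_nat /m; exact: leqnSn.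
have hm' : 2 < eta * m%:R by rewrite mulrC -ltr_pdivrMr.
have [N1 HN1] := IH (theta ^+ m) (exprn_gt0 _ th0).
exists (m * N1 + m)%N => T A g Hg HN.
set n := #|A| in HN *.
set B := [set u in A | (0 < g u)%N].
set b := #|B|.
have n1 : (m <= n)%N by apply: leq_trans HN; apply: leq_addl.
have hn : 2 < eta * n%:R.
  by apply: (lt_le_trans hm'); rewrite ler_wpM2l ?ler_nat ?(ltW eta0).
have BA : B \subset A by apply/subsetP => u; rewrite inE => /andP[].
case: (leqP (b * m) n) => Hbm.
  have step1 : (\prod_(v in A) (#|[set u in A | g v < g u]|).+1 <= b.+1 ^ n)%N.
    rewrite -prod_nat_const; apply: leq_prod => v vA; rewrite ltnS.
    apply: subset_leq_card; apply/subsetP => u; rewrite !inE => /andP[-> lt].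
    by rewrite (leq_ltn_trans _ lt).
  apply: (le_trans (y := (b.+1%:R) ^+ n)).
    by rewrite -natrX ler_nat.
  apply: lerXn2r; [by rewrite nnegrE ler0n | by rewrite nnegrE mulr_ge0 ?ler0n // ltW | ].
  have hb : 2 * b%:R <= eta * n%:R.
    apply: (le_trans (y := eta * m%:R * b%:R)); first by rewrite ler_wpM2r ?ler0n // ltW.
    rewrite -mulrA; apply: ler_wpM2l; first exact: ltW.
    by rewrite -natrM ler_nat mulnC.
  rewrite -natr1 -(ler_pM2l (ltr0n R 2)) mulrDr mulr1.
  apply: (le_trans (y := eta * n%:R + eta * n%:R)).
    by rewrite lerD // ltW.
  by rewrite mulr2n mulrDl mul1r.
have m0 : (0 < m)%N by [].
have Nb : (N1 <= b)%N.
  have : (N1 * m < b * m)%N by apply: leq_ltn_trans Hbm; apply: leq_trans HN; lia.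
  by rewrite ltn_pmul2r // => /ltnW.
pose g' := fun u => (g u).-1.
have HgB : forall x, x \in B -> (g' x < h)%N.
  move=> x; rewrite inE => /andP[xA gx]; have := Hg x xA; rewrite /g'; lia.
have IHB := HN1 T B g' HgB Nb.
have eqB : forall v, v \in B -> [set u in A | (g v < g u)%N] = [set u in B | (g' v < g' u)%N].
  move=> v; rewrite inE => /andP[vA gv]; apply/setP => u; rewrite !inE /g'.
  case: (u \in A) => //=; apply/idP/idP; lia.
have bn : (b <= n)%N by apply: subset_leq_card.
rewrite (big_setID B) /= (finset.setIidPr BA) natrM.
rewrite (eq_bigr (fun v => #|[set u in B | (g' v < g' u)%N]|.+1)); last first.
  by move=> v vB; rewrite eqB.
have HY : (\prod_(i in A :\: B) #|[set u in A | (g i < g u)%N]|.+1 <= n.+1 ^ (n - b))%N.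
  have cD : #|A :\: B| = (n - b)%N by rewrite cardsD (finset.setIidPr BA).
  rewrite -cD -prod_nat_const; apply: leq_prod => v _.
  by rewrite ltnS; apply: subset_leq_card; apply/subsetP => u; rewrite inE => /andP[].
apply: (le_trans (y := (theta ^+ m * b%:R) ^+ b * n.+1%:R ^+ (n - b))).
  apply: ler_pM => //.
  by rewrite -natrX ler_nat.
apply: (le_trans (y := theta ^+ n * n.+1%:R ^+ b * n.+1%:R ^+ (n - b))).
  apply: ler_wpM2r; first by rewrite exprn_ge0.
  rewrite exprMn -exprM; apply: ler_pM.
  - by rewrite exprn_ge0 // ltW.
  - by rewrite exprn_ge0.
  - apply: ler_wiXn2l; [exact: ltW | exact: th1 | by rewrite mulnC ltnW].
  - apply: lerXn2r; rewrite ?nnegrE ?ler0n // ler_nat; exact: leqW.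
rewrite -mulrA -exprD subnKC // -exprMn.
apply: lerXn2r; rewrite ?nnegrE.
- by rewrite mulr_ge0 ?ler0n // ltW.
- by rewrite mulr_ge0 ?ler0n // ltW.
apply: (le_trans (y := eta / 2 * (2 * n%:R))).
  apply: ler_pM => //; first exact: ltW.
  rewrite -natr1 mulr2n mulrDl mul1r lerD2l ler1n; lia.
by rewrite mulrA -(mulrA eta) mulVf ?pnatr_eq0 // mulr1.
Qed.


Lemma upperA (S : pattern_set) n : (num_avoiding S n <= n.+1 ^ n)%N.
Proof.
rewrite /num_avoiding; apply: leq_trans (max_card _) _.
by rewrite card_ffun card_option card_ord.
Qed.

Lemma bounded (R : realType) (S : pattern_set) a b (pa : {perm 'I_a}) (pb : {perm 'I_b}) :
  pa \in S a -> incp pa -> pb \in S b -> decp pb ->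
  exists h : nat, forall eta : R, 0 < eta -> exists N, forall n, (N <= n)%N ->
    (num_avoiding S n)%:R <= (h%:R * eta * n%:R) ^+ n.
Proof.
move=> Sa Ia Sb Db; exists (a * b)%N => eta eta0.
have [N HN] := Qh (a * b) eta0.
exists N => n Hn.
have Hc := count_bound (h := (a * b)%N) (fun par Hf Hav => ES_bound Sa Ia Sb Db Hf Hav) (S := S) (n := n).
apply: (le_trans (y := (\sum_(g : {ffun 'I_n -> 'I_(a * b)})
      \prod_(v in [set: 'I_n]) (#|[set u in [set: 'I_n] | (g v < g u)%N]|).+1)%:R)).
  by rewrite ler_nat.
rewrite natr_sum.
apply: (le_trans (y := \sum_(g : {ffun 'I_n -> 'I_(a * b)}) (eta * n%:R) ^+ n)).
  apply: ler_sum => g _.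
  have := HN 'I_n [set: 'I_n] (fun v => nat_of_ord (g v)) (fun x _ => ltn_ord (g x)).
  rewrite cardsT card_ord; exact.
rewrite sumr_const card_ffun !card_ord -[_ *+ (_ ^ _)%N]mulr_natl natrX -exprMn mulrA.
by [].

Qed.

Unset Implicit Arguments. Set Strict Implicit.
Local Open Scope classical_set_scope.

Theorem corollary5p10 (R : realType) (S : pattern_set) (L : R) :
  (fun n : nat => ((num_avoiding S n)%:R `^ (n%:R^-1)) / n%:R) @ \oo --> L ->
  L = 0 \/ (expR (-1) <= L <= 1).
Proof.
move=> HL.
have u0 : forall n : nat, 0 <= (num_avoiding S n)%:R `^ (n%:R^-1) / n%:R :> R.
  by move=> n; rewrite divr_ge0 ?powR_ge0.
have Lge0 : 0 <= L.
  by apply: (cvgr_to_ge HL); exists 0%N => // n _; apply: u0.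
have Lle1 : L <= 1.
  apply/ler_addgt0Pr => e e0; apply: (cvgr_to_le HL).
  exists (Num.bound e^-1).+1 => // n /= Hn.
  have n0 : (0 < n)%N by apply: leq_trans Hn.
  apply: u_le => //; first by rewrite addr_ge0 // ltW.
  apply: (le_trans (y := (n.+1%:R) ^+ n)).
    by rewrite -natrX ler_nat upperA.
  apply: lerXn2r; rewrite ?nnegrE ?ler0n ?mulr_ge0 ?addr_ge0 ?ler0n //; first exact: ltW.
  rewrite mulrDl mul1r -natr1 lerD2l.
  have ei : 0 <= e^-1 by rewrite invr_ge0 ltW.
  have hb := @archi_boundP R e^-1 ei.
  have : e^-1 <= n%:R.
    apply: (le_trans (ltW hb)); rewrite ler_nat; exact: ltnW.
  by rewrite -(ler_pM2l e0) mulfV ?gt_eqF.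
case: (EM ((exists a (pa : {perm 'I_a}), pa \in S a /\ incp pa) /\
    (exists b (pb : {perm 'I_b}), pb \in S b /\ decp pb))) =>
   [[[a [pa [Sa Ia]]] [b [pb [Sb Db]]]] | Hn].
  left; apply/le_anti; rewrite Lge0 andbT.
  have [h Hh] := @bounded R S a b pa pb Sa Ia Sb Db.
  apply/ler_addgt0Pr => e e0; rewrite add0r.
  have hp : 0 < h.+1%:R :> R by rewrite ltr0n.
  have [N HN] := Hh (e / h.+1%:R) (divr_gt0 e0 hp).
  apply: (cvgr_to_le HL); exists N.+1 => // n /= Hn.
  have n0 : (0 < n)%N by apply: leq_trans Hn.
  apply: (le_trans (y := h%:R * (e / h.+1%:R))).
    apply: u_le => //; first by rewrite mulr_ge0 ?divr_ge0 // ltW.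
    by apply: HN; apply: ltnW.
  by rewrite mulrA ler_pdivrMr // mulrC ler_wpM2l ?ler_nat // ltW.
right; rewrite Lle1 andbT; apply: (cvgr_to_ge HL); exists 1%N => // n /= n0.
apply: u_ge => //.
rewrite mulrC; apply: (le_trans (fact_ge _ n)); rewrite ler_nat.
have [Hi|Hi] := EM (exists a (pa : {perm 'I_a}), pa \in S a /\ incp pa).
  apply: lowerB_dec => k pi Hpi Hd; apply: Hn; split => //; by exists k, pi.
apply: lowerB_inc => k pi Hpi Hd; apply: Hi; by exists k, pi.
Qed.
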